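(* Assume the setting described in the context and fix a compact interval $I\subset(0,\infty)$. Suppose Assumptions (A1) and (A2) hold. Then for every $x\in F$, \[\lim_{n\rightarrow\infty}\sup_{t\in I}\left|\beta(n)q^n_{\lfloor\gamma(n)t\rfloor}(g_n(x))-q_t(x)\right|=0.\]
   Context: Let $(E,d_E)$ be a metric space and $F\subseteq E$ such that $F\cap\overline{B}_E(x,r)$ is compact for all $x\in E$, $r>0$ ($\overline{B}_E$, $B_E$ closed and open balls in $E$). Let $d_F:=d_E|_{F\times F}$, $B_F(x,r)$ the open ball in $(F,d_F)$, $\rho\in F$, $\nu$ a Radon measure of full support on $(F,d_F)$ (extended to $E$ by $\nu(A):=\nu(A\cap F)$), and $(q_t(x))_{x\in F,t>0}$ jointly continuous in $(t,x)$ with $q_t\ge0$, $\int_Fq_t\,d\nu=1$ for each $t>0$. For a locally finite connected graph $G$ with at least two vertices and distinguished vertex $\rho(G)$: $d_G$ is the shortest-path metric, $B_G(x,r)$ the open $d_G$-ball; $\mu^G$ a symmetric weight with $\mu^G_{xy}>0$ iff $\{x,y\}\in E(G)$; $\mu^G_x:=\sum_y\mu^G_{xy}$; $\nu^G(A):=\sum_{x\in A}\mu^G_x$; $X^G$ the discrete time simple random walk with $P_G(x,y)=\mu^G_{xy}/\mu^G_x$ and law $\mathbf{P}^G_x$; $p^G_m(x,y):=\mathbf{P}^G_x(X^G_m=y)/\nu^G(\{y\})$, $q^G_m(x,y):=\frac12(p^G_m(x,y)+p^G_{m+1}(x,y))$, $q^G_m(x):=q^G_m(\rho(G),x)$. $(G^n)_{n\ge1}$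 are such graphs with $V(G^n)\subseteq E$, $\rho(G^n)=\rho$; write $\nu^n,X^n,q^n$ for $\nu^{G^n},X^{G^n},q^{G^n}$. $(\alpha(n)),(\beta(n)),(\gamma(n))$ are non-negative sequences diverging to $\infty$. For $x\in E$, $g_n(x)$ is a point of $V(G^n)$ minimising $d_E(x,\cdot)$ over $V(G^n)$. Assumption (A1): (a) there is $c_1>0$ with $d_{G^n}(x,y)\ge c_1\alpha(n)d_E(x,y)$ for all $x,y\in V(G^n)$, $n\ge1$; and a non-negative $\tilde\alpha(n)=o(\alpha(n))$ such that for each $r>0$ there exist $c_2<\infty$, $n_0$ with $d_{G^n}(x,y)\le c_2\alpha(n)d_E(x,y)+\tilde\alpha(n)$ for all $x,y\in V(G^n)\cap B_E(\rho,r)$, $n\ge n_0$. (b) For each $r>0$, $\lim_n\sup_{x\in B_F(\rho,r)}d_E(x,V(G^n))=0$. (c) For every $x\in F$, $r>0$, $\lim_n\beta(n)^{-1}\nu^n(B_E(x,r))=\nu(B_E(x,r))$. (d) For every compact interval $I\subset(0,\infty)$, $x\in F$, $r>0$, $\lim_n\mathbf{P}^{G^n}_\rho(X^n_{\lfloor\gamma(n)t\rfloor}\in B_E(x,r))=\int_{B_F(x,r)}q_t(y)\nu(dy)$ uniformly for $t\in I$. Assumption (A2): for every compact interval $I\subset(0,\infty)$ and $r>0$, \[\lim_{\delta\to0}\limsup_{n\to\infty}\sup_{\substack{x,y\in B_{G^n}(\rho,\alpha(n)r):\\ d_{G^n}(x,y)\le\alpha(n)\delta}}\sup_{t\in I}\beta(n)\left|q^n_{\lfloor\gamma(n)t\rfloor}(x)-q^n_{\lfloor\gamma(n)t\rfloor}(y)\right|=0.\]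 *)

(* Defs.v *)
From HB Require Import structures.
From mathcomp Require Import all_boot all_order all_algebra.
From mathcomp Require Import all_classical all_reals all_analysis.
Set Implicit Arguments. Unset Strict Implicit. Unset Printing Implicit Defensive.
Import Order.TTheory GRing.Theory Num.Theory.
Import numFieldNormedType.Exports.
Local Open Scope classical_set_scope.
Local Open Scope ring_scope.

Section Defs.
Context {R : realType} {E : choiceType}.

Definition is_metric (d : E -> E -> R) : Prop :=
  (forall x y, 0 <= d x y) /\ (forall x y, d x y = 0 <-> x = y) /\
  (forall x y, d x y = d y x) /\ (forall x y z, d x z <= d x y + d y z).

Definition dball (d : E -> E -> R) (x : E) (r : R) : set E := [set y | d x y < r].
Definition dcball (d : E -> E -> R) (x : E) (r : R) : set E := [set y | d x y <= r].

Definition dopen (d : E -> E -> R) (U : set E) : Prop :=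
  forall x, U x -> exists2 r : R, 0 < r & dball d x r `<=` U.

Definition dcompact (d : E -> E -> R) (K : set E) : Prop :=
  forall C : set (set E), (forall U, C U -> dopen d U) ->
    K `<=` \bigcup_(U in C) U ->
    exists2 C' : set (set E), finite_set C' /\ C' `<=` C & K `<=` \bigcup_(U in C') U.

Definition dist_set (d : E -> E -> R) (x : E) (A : set E) : R := inf [set d x v | v in A].

Fixpoint kpath (adj : E -> E -> Prop) (k : nat) (x y : E) : Prop :=
  match k with
  | 0%N => x = y
  | k'.+1 => exists z, adj x z /\ kpath adj k' z y
  end.

Definition is_lf_connected_graph (V : set E) (adj : E -> E -> Prop) : Prop :=
  (forall x y, adj x y -> V x /\ V y) /\
  (forall x y, adj x y -> adj y x) /\
  (forall x, ~ adj x x) /\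
  (forall x, V x -> finite_set [set y | adj x y]) /\
  (forall x y, V x -> V y -> exists k, kpath adj k x y) /\
  (exists x y, V x /\ V y /\ x <> y).

Definition gdist (adj : E -> E -> Prop) (x y : E) : R :=
  inf [set (k%:R : R) | k in [set k : nat | kpath adj k x y]].

Definition gball (V : set E) (adj : E -> E -> Prop) (x : E) (r : R) : set E :=
  [set y | V y /\ gdist adj x y < r].

(** weights: mu x y is the conductance (extended by 0 off the edges) *)
Definition wdeg (mu : E -> E -> R) (x : E) : R := fine (\esum_(y in [set: E]) (mu x y)%:E).

Definition gmeasure (V : set E) (mu : E -> E -> R) (A : set E) : \bar R :=
  \esum_(x in A `&` V) (wdeg mu x)%:E.

(** m-step transition probabilities P_x(X_m = y) of the discrete time
    random walk with P(x,z) = mu x z / mu_x *)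
Fixpoint wprob (mu : E -> E -> R) (m : nat) (x y : E) : \bar R :=
  match m with
  | 0%N => if `[< x = y >] then 1%E else 0%E
  | m'.+1 => \esum_(z in [set: E]) ((mu x z / wdeg mu x)%:E * wprob mu m' z y)%E
  end.

Definition wprob_set (V : set E) (mu : E -> E -> R) (m : nat) (x : E) (A : set E) : \bar R :=
  \esum_(y in A `&` V) wprob mu m x y.

Definition pkernel (mu : E -> E -> R) (m : nat) (x y : E) : R :=
  fine (wprob mu m x y) / wdeg mu y.

Definition qkernel (mu : E -> E -> R) (m : nat) (x y : E) : R :=
  (pkernel mu m x y + pkernel mu m.+1 x y) / 2.

End Defs.

Definition nfloor {R : realType} (x : R) : nat := Num.truncn x.

(* Main.v *)
Require Import Defs.
From HB Require Import structures.
From mathcomp Require Import all_boot all_order all_algebra.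
From mathcomp Require Import all_classical all_reals all_analysis.
From mathcomp Require Import lra ring.
Import Order.TTheory GRing.Theory Num.Theory.
Import numFieldNormedType.Exports.
Local Open Scope classical_set_scope.
Local Open Scope ring_scope.


Section esumZ.
Context {R : realType}.
Lemma esumZ (T : choiceType) (I : set T) (c : R) (f : T -> R) : 0 <= c ->
  \esum_(i in I) ((c * f i)%:E) = (c%:E * \esum_(i in I) (f i)%:E)%E.
Proof.
move=> c0; rewrite /esum -ereal_supZl //; last first.
  by apply/set0P; exists (\sum_(x \in set0) (f x)%:E)%E; exists set0 => //; exact: fsets_set0.
rewrite image_comp; congr ereal_sup; apply: eq_imagel => A [finA _] /=.
by rewrite !fsumEFin // -EFinM mulr_fsumr.
Qed.
End esumZ.

Section integral_nm.
Context {R : realType} (d : measure_display) (T : measurableType d) (mu : {measure set T -> \bar R}).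
Local Open Scope ereal_scope.
Lemma le_integral_nm (D : set T) (f1 f2 : T -> \bar R) :
  (forall x, D x -> 0 <= f1 x) -> (forall x, D x -> f1 x <= f2 x) ->
  \int[mu]_(x in D) f1 x <= \int[mu]_(x in D) f2 x.
Proof.
move=> f10 f12.
have f20 : forall x, D x -> 0 <= f2 x by move=> x Dx; exact: le_trans (f10 _ Dx) (f12 _ Dx).
rewrite (ge0_integralE mu f10) (ge0_integralE mu f20).
apply: le_ereal_sup => z [h hle <-]; exists h => // x.
apply: le_trans (hle x) _; rewrite /patch; case: ifP => // /[!inE] Dx.
exact: f12.
Qed.
End integral_nm.


Section sandwich.
Context {R : realType}.

Lemma real_sandwich (x c e N : R) : 0 <= N -> 0 <= e ->
  Num.max (c - e) 0 * N <= x -> x <= (c + e) * N -> `|x - c * N| <= e * N.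
Proof.
move=> N0 e0 h1 h2; have h3 : (c - e) * N <= x.
  apply: le_trans h1; apply: ler_wpM2r => //; by rewrite le_max lexx.
rewrite ler_norml; apply/andP; split; nra.
Qed.

Lemma dist_bounds {x c e : R} : `|x - c| <= e -> c - e <= x /\ x <= c + e.
Proof. by rewrite ler_norml => /andP[h1 h2]; split; lra. Qed.

Lemma esum_sandwich (T : choiceType) (I : set T) (f w : T -> R) (c e Gr : R) :
  \esum_(i in I) (w i)%:E = Gr%:E -> 0 <= c -> 0 <= e ->
  (forall y, I y -> 0 <= w y) -> (forall y, I y -> 0 <= f y) ->
  (forall y, I y -> `|f y - c| <= e) ->
  exists S, \esum_(i in I) (f i * w i)%:E = S%:E /\ `|S - c * Gr| <= e * Gr.
Proof.
move=> hG c0 e0 w0 f0 fc.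
have Gr0 : 0 <= Gr by rewrite -lee_fin -hG; apply: esum_ge0 => y /w0; rewrite lee_fin.
have up : (\esum_(i in I) (f i * w i)%:E <= ((c + e) * Gr)%:E)%E.
  rewrite EFinM -hG -esumZ; last by rewrite addr_ge0.
  apply: le_esum => y Iy; rewrite lee_fin; apply: ler_wpM2r; first exact: w0.
  by case: (dist_bounds (fc y Iy)).
have lo : (((Num.max (c - e) 0) * Gr)%:E <= \esum_(i in I) (f i * w i)%:E)%E.
  rewrite EFinM -hG -esumZ; last by rewrite le_max lexx orbT.
  apply: le_esum => y Iy; rewrite lee_fin; apply: ler_wpM2r; first exact: w0.
  rewrite ge_max f0 // andbT.
  by case: (dist_bounds (fc y Iy)).
have S0 : (0 <= \esum_(i in I) (f i * w i)%:E)%E.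
  by apply: esum_ge0 => y Iy; rewrite lee_fin mulr_ge0 //; [exact: f0|exact: w0].
have fin : \esum_(i in I) (f i * w i)%:E \is a fin_num.
  by rewrite ge0_fin_numE // (le_lt_trans up) // ltry.
exists (fine (\esum_(i in I) (f i * w i)%:E)); split; first by rewrite fineK.
apply: real_sandwich => //.
  by rewrite -lee_fin fineK.
by rewrite -lee_fin fineK.
Qed.

Context (d : measure_display) (T : measurableType d) (mu : {measure set T -> \bar R}).

Lemma int_sandwich (D : set T) (f : T -> R) (c e N : R) :
  measurable D -> mu D = N%:E -> 0 <= c -> 0 <= e ->
  (forall y, D y -> 0 <= f y) -> (forall y, D y -> `|f y - c| <= e) ->
  (\int[mu]_(y in D) (f y)%:E)%E \is a fin_num /\
  `|fine (\int[mu]_(y in D) (f y)%:E)%E - c * N| <= e * N.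
Proof.
move=> mD hN c0 e0 f0 fc.
have N0 : 0 <= N by rewrite -lee_fin -hN; exact: measure_ge0.
have up : (\int[mu]_(y in D) (f y)%:E <= ((c + e) * N)%:E)%E.
  rewrite EFinM -hN -integral_cst //; apply: le_integral_nm => y Dy.
    by rewrite lee_fin f0.
  by rewrite lee_fin /=; case: (dist_bounds (fc y Dy)).
have lo : (((Num.max (c - e) 0) * N)%:E <= \int[mu]_(y in D) (f y)%:E)%E.
  rewrite EFinM -hN -integral_cst //; apply: le_integral_nm => y Dy.
    by rewrite lee_fin /= le_max lexx orbT.
  rewrite lee_fin /= ge_max f0 // andbT.
  by case: (dist_bounds (fc y Dy)).
have S0 : (0 <= \int[mu]_(y in D) (f y)%:E)%E.
  by apply: integral_ge0 => y Dy; rewrite lee_fin f0.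
have fin : (\int[mu]_(y in D) (f y)%:E)%E \is a fin_num.
  by rewrite ge0_fin_numE // (le_lt_trans up) // ltry.
split => //; apply: real_sandwich => //.
  by rewrite -lee_fin fineK.
by rewrite -lee_fin fineK.
Qed.
End sandwich.


Section metric.
Context {R : realType} {d0 : measure_display} {E : measurableType d0}
  (dE : E -> E -> R) (hdE : is_metric dE).

Lemma dball_open x r : dopen dE (dball dE x r).
Proof.
case: hdE => d0' [deq [dsym dtri]].
move=> y; rewrite /dball /= => hy; exists (r - dE x y); first by rewrite subr_gt0.
move=> z; rewrite /dball /= => hz; have := dtri x y z; lra.
Qed.

Lemma dopen_meas (hborel : @measurable d0 E = <<s [set U | dopen dE U] >>) U :
  dopen dE U -> measurable U.
Proof. by move=> oU; rewrite hborel; exact: sub_sigma_algebra. Qed.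

Let U (z : E) (k : nat) := [set y | (k.+1%:R : R)^-1 < dE y z].

Let U_mono z k k' : (k <= k')%N -> U z k `<=` U z k'.
Proof.
move=> kk' y /=; apply: le_lt_trans; rewrite lef_pV2 ?posrE // ler_nat.
by rewrite ltnS.
Qed.

Let bound_seq z (s : seq (set E)) : (forall V, V \in s -> range (U z) V) ->
  exists k0, forall V, V \in s -> V `<=` U z k0.
Proof.
elim: s => [|V s IH] hs; first by exists 0%N.
have [k1 _ hk1] := hs V (mem_head _ _).
have [k2 hk2] := IH (fun W hW => hs W (@mem_behead _ (V :: s) W hW)).
exists (maxn k1 k2) => W; rewrite in_cons => /orP[/eqP ->|/hk2 hW].
  by rewrite -hk1; apply: U_mono; exact: leq_maxl.
by apply: subset_trans hW _; apply: U_mono; exact: leq_maxr.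
Qed.

Lemma dcompact_closed K : dcompact dE K -> dopen dE (~` K).
Proof.
case: hdE => d0' [deq [dsym dtri]].
move=> cK z nKz.
have oU k : dopen dE (U z k).
  move=> y hy; rewrite /U /= in hy; exists (dE y z - (k.+1%:R)^-1); first by rewrite subr_gt0.
  move=> w; rewrite /dball /U /= => hw; have := dtri y w z; move: (k.+1%:R^-1) hy hw => i hy hw; lra.
have cov : K `<=` \bigcup_(V in range (U z)) V.
  move=> y Ky; have yz : y <> z by move=> yz; apply: nKz; rewrite -yz.
  have dpos : 0 < dE y z.
    by rewrite lt0r d0' andbT; apply/eqP => /deq.
  exists (U z (Num.truncn (dE y z)^-1)); first by exists (Num.truncn (dE y z)^-1).
  rewrite /U /= -[X in _ < X]invrK ltf_pV2 ?posrE ?invr_gt0 //.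
  exact: truncnS_gt.
have oC : forall V, range (U z) V -> dopen dE V by move=> V [k _ <-]; exact: oU.
have [C' [finC' C'C] KC'] := cK (range (U z)) oC cov.
have [B hB] := finite_fsetP.1 finC'.
have hs : forall V, V \in finmap.enum_fset B -> range (U z) V.
  by move=> V hV; apply: C'C; rewrite hB; exact: hV.
have [k0 hk0] := @bound_seq z _ hs.
exists ((k0.+1%:R)^-1); first by rewrite invr_gt0.
move=> w; rewrite /dball /= => hw Kw.
have [V C'V Vw] := KC' w Kw.
have : U z k0 w by apply: hk0 Vw; move: C'V; rewrite hB.
rewrite /U /= dsym; move: (k0.+1%:R^-1) hw => i hw; lra.
Qed.

Lemma meas_FB (hborel : @measurable d0 E = <<s [set U | dopen dE U] >>) (F : set E)
  (hFcpt : forall x r, 0 < r -> dcompact dE (F `&` dcball dE x r)) x r :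
  0 < r -> measurable (F `&` dball dE x r).
Proof.
move=> r0.
have -> : F `&` dball dE x r = (F `&` dcball dE x r) `&` dball dE x r.
  apply/seteqP; split => y /=; first by move=> [Fy hy]; split => //; split => //; exact: ltW.
  by move=> [[Fy _] hy].
apply: measurableI. 2: apply: (dopen_meas hborel). 2: exact: dball_open.
rewrite -[X in measurable X]setCK; apply: measurableC.
by apply: (dopen_meas hborel); apply: dcompact_closed; exact: hFcpt.
Qed.
End metric.


Section graph.
Context {R : realType} {E : choiceType} (mu : E -> E -> R)
  (mu0 : forall x y, 0 <= mu x y).

Lemma wdeg_ge0 x : 0 <= wdeg mu x.
Proof. by apply: fine_ge0; apply: esum_ge0 => y _; rewrite lee_fin. Qed.

Lemma sumP_le1 x : (\esum_(z in [set: E]) (mu x z / wdeg mu x)%:E <= 1)%E.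
Proof.
have [w0|wn0] := eqVneq (wdeg mu x) 0.
  by rewrite esum1 // => z _; rewrite w0 invr0 mulr0.
have Sfin : \esum_(z in [set: E]) (mu x z)%:E \is a fin_num.
  have S0 : (0 <= \esum_(z in [set: E]) (mu x z)%:E)%E.
    by apply: esum_ge0 => y _; rewrite lee_fin.
  move: wn0; rewrite /wdeg; case: (\esum_(z in [set: E]) (mu x z)%:E) S0 => //.
  by rewrite /= eqxx.
under eq_esum do rewrite mulrC.
rewrite esumZ; last by rewrite invr_ge0 wdeg_ge0.
rewrite -[X in (_ * X)%E]fineK // -/(wdeg mu x) -EFinM mulVf //.
Qed.

Lemma wprob_ge0 m x y : (0 <= wprob mu m x y)%E.
Proof.
elim: m x => [|m IH] x /=; first by case: ifP.
apply: esum_ge0 => z _; apply: mule_ge0 => //.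
by rewrite lee_fin divr_ge0 // wdeg_ge0.
Qed.

Lemma wprob_le1 m x y : (wprob mu m x y <= 1)%E.
Proof.
elim: m x => [|m IH] x /=; first by case: ifP.
apply: le_trans (sumP_le1 x); apply: le_esum => z _.
rewrite -[X in (_ <= X)%E]mule1; apply: lee_wpmul2l => //.
by rewrite lee_fin divr_ge0 // wdeg_ge0.
Qed.

Lemma wprob_fin m x y : wprob mu m x y = (fine (wprob mu m x y))%:E.
Proof.
by rewrite fineK // ge0_fin_numE ?wprob_ge0 // (le_lt_trans (wprob_le1 m x y)) // ltry.
Qed.

Lemma pkernel_wdeg m x y : 0 < wdeg mu y ->
  ((pkernel mu m x y) * wdeg mu y)%:E = wprob mu m x y.
Proof.
move=> w0; rewrite /pkernel mulrVK ?unitfE ?gt_eqF //.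
by rewrite -wprob_fin.
Qed.

Lemma pkernel_ge0 m x y : 0 <= pkernel mu m x y.
Proof. by rewrite /pkernel divr_ge0 ?wdeg_ge0 // fine_ge0 // wprob_ge0. Qed.

Lemma qkernel_ge0 m x y : 0 <= qkernel mu m x y.
Proof. by rewrite /qkernel divr_ge0 // addr_ge0 // pkernel_ge0. Qed.

Lemma wdeg_gt0 (V : set E) (adj : E -> E -> Prop) :
  is_lf_connected_graph V adj -> (forall x y, 0 < mu x y <-> adj x y) ->
  forall x, V x -> 0 < wdeg mu x.
Proof.
move=> [hV [hsym [hirr [hfin [hconn [u [v [Vu [Vv uv]]]]]]]]] hmu x Vx.
have [w [Vw wx]] : exists w, V w /\ w <> x.
  case: (eqVneq x u) => [xu|xu]; first by exists v; split => //; rewrite xu => /esym.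
  by exists u; split => // /esym /eqP; rewrite (negbTE xu).
have [z0 az0] : exists z, adj x z.
  have [[|k] hk] := hconn x w Vx Vw; first by exfalso; apply: wx; rewrite -hk.
  by case: hk => z [hz _]; exists z.
set A := [set z | adj x z].
have finA : finite_set A by exact: hfin.
have -> : wdeg mu x = \sum_(z \in A) mu x z.
  rewrite /wdeg -[RHS]/(fine ((\sum_(z \in A) mu x z)%:E)) -fsumEFin // -esum_fset //; last by move=> i _; rewrite lee_fin.
  congr fine; rewrite [in RHS]esum_mkcond; apply: eq_esum => z _.
  case: ifPn => // /negP zA; apply/eqP; rewrite eqe eq_le mu0 andbT.
  rewrite leNgt; apply/negP => /hmu hz; apply: zA; rewrite inE; exact: hz.
rewrite (fsbigD1 z0) //; apply: (lt_le_trans (proj2 (hmu x z0) az0)).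
rewrite lerDl; exact: fsumr_ge0.
Qed.
End graph.


Section unif.
Context {R : realType} {E : Type} (dE : E -> E -> R) (q : R -> E -> R) (F : set E) (x : E).
Hypothesis dxx : dE x x = 0.
Hypothesis Fx : F x.
Hypothesis hq_cont : forall t, 0 < t -> forall e : R, 0 < e ->
     exists2 del : R, 0 < del & forall s y, 0 < s -> F y -> `|s - t| < del ->
       dE x y < del -> `|q s y - q t x| < e.

Lemma unif_cont (a b : R) : 0 < a -> forall e : R, 0 < e ->
  exists2 del : R, 0 < del & forall t, a <= t <= b -> forall s y, 0 < s -> F y ->
    `|s - t| < del -> dE x y < del -> `|q s y - q t x| < e.
Proof.
move=> a0 e e0.
have cK0 : compact `[a, b]%classic := @segment_compact R a b.
have cK := (near_covering_withinP _).2 ((compact_near_coveringP _).1 cK0).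
set P := (fun del t => forall s y, 0 < s -> F y ->
    `|s - t| < del -> dE x y < del -> `|q s y - q t x| < e).
have H : \forall del \near 0^'+, `[a, b] `<=` P del.
  apply: cK => t /=; rewrite in_itv /= => /andP[ha2 hb2].
  have t0 : 0 < t by lra.
  have [d0 d00 hd0] := hq_cont _ t0 (e / 2) ltac:(by rewrite divr_gt0).
  near=> t' del => /= _ s y s0 Fy hst hxy.
  have h1 : `|q s y - q t x| < e / 2.
    apply: hd0 => //; last first.
      by apply: lt_trans hxy _; near: del; exact: nbhs_right_lt; exact: divr_gt0.
    rewrite (le_lt_trans (ler_distD t' _ _)) //.
    have -> : d0 = d0 / 2 + d0 / 2 by rewrite -splitr.
    rewrite ltrD //; last first.
      rewrite distrC; near: t'; exists (d0 / 2) => //; exact: divr_gt0.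
    by apply: lt_trans hst _; near: del; apply: nbhs_right_lt; exact: divr_gt0.
  have h2 : `|q t' x - q t x| < e / 2.
    apply: hd0 => //; last by rewrite dxx.
      near: t'; exact: lt_nbhsr t0.
  have -> : q s y - q t' x = (q s y - q t x) - (q t' x - q t x) by ring.
  rewrite (le_lt_trans (ler_normB _ _)) //.
  by rewrite [e]splitr ltrD.
have /filter_ex[del [del0 hdel]] : \forall del \near 0^'+, 0 < del /\ `[a, b] `<=` P del.
  by near=> del; split; [near: del; exact: nbhs_right_gt | near: del; exact: H].
exists del => // t ht; apply: hdel; rewrite /= in_itv /=; exact: ht.
Unshelve. all: by end_near.
Qed.
End unif.


Section lims.
Context {R : realType}.

Lemma A2_extract (u : R -> (\bar R)^nat) :
  limn_esup (u del) @[del --> 0^'+] --> 0%E ->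
  forall eta, 0 < eta -> exists2 del, 0 < del & \forall n \near \oo, (u del n < eta%:E)%E.
Proof.
move=> /fine_cvgP[hfin hcvg] eta eta0.
have hc := (cvgrPdist_lt _ _).1 hcvg eta eta0.
have /filter_ex[del [del0 [fd hd]]] : \forall del \near 0^'+, 0 < del /\
    (limn_esup (u del) \is a fin_num /\ `|0 - fine (limn_esup (u del))| < eta).
  near=> del; split; first by near: del; exact: nbhs_right_gt.
  by split; near: del; [exact: hfin | exact: hc].
have Lt : (limn_esup (u del) < eta%:E)%E.
  rewrite -(fineK fd) lte_fin; move: hd; rewrite sub0r normrN.
  exact: le_lt_trans (ler_norm _).
exists del => //.
have hl : limn (esups (u del)) = ereal_inf (range (esups (u del))).
  apply: cvg_lim; [exact: ereal_hausdorff | exact: cvg_esups_inf].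
rewrite limn_esup_lim hl in Lt.
have [_ [n0 _ <-] hy] := ereal_inf_lt Lt.
exists n0 => // n /= hn; apply: le_lt_trans hy.
by apply: ereal_sup_ubound; exists n.
Unshelve. all: by end_near.
Qed.

Lemma ecvg_extract {T : Type} {G : set_system T} {FF : ProperFilter G}
   {f : T -> \bar R} {l : R} :
  f x @[x --> G] --> l%:E -> forall e, 0 < e ->
  \forall x \near G, f x = (fine (f x))%:E /\ `|l - fine (f x)| < e.
Proof.
move=> /fine_cvgP[hfin hcvg] e e0.
have hc := (cvgrPdist_lt _ _).1 hcvg e e0.
near=> x; split; last by near: x; exact: hc.
by rewrite fineK //; near: x; exact: hfin.
Unshelve. all: by end_near.
Qed.

Lemma ecvg0_intro (u : (\bar R)^nat) :
  (forall e, 0 < e -> \forall n \near \oo, (0 <= u n)%E /\ (u n <= e%:E)%E) ->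
  u n @[n --> \oo] --> 0%E.
Proof.
move=> h; apply/fine_cvgP; split.
  have := h 1 ltr01; apply: filterS => n [h0 h1].
  by rewrite ge0_fin_numE // (le_lt_trans h1) // ltry.
apply/(cvgrPdist_le _ _).2 => e e0.
have := h e e0; apply: filterS => n [h0 h1].
rewrite sub0r normrN ger0_norm; last exact: fine_ge0.
have fin : u n \is a fin_num by rewrite ge0_fin_numE // (le_lt_trans h1) // ltry.
by rewrite -lee_fin fineK.
Qed.
End lims.


Section misc.
Context {R : realType}.

Lemma cont_bound (f : R -> R) (a b : R) : 0 < a ->
  (forall t, 0 < t -> forall e : R, 0 < e -> exists2 del : R, 0 < del &
     forall s, 0 < s -> `|s - t| < del -> `|f s - f t| < e) ->
  exists M, forall t, a <= t <= b -> f t <= M.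
Proof.
move=> a0 hf.
have cK0 : compact `[a, b]%classic := @segment_compact R a b.
have cK := (near_covering_withinP _).2 ((compact_near_coveringP _).1 cK0).
have H : \forall M \near +oo, `[a, b] `<=` (fun t => f t < M).
  apply: cK => t /=; rewrite in_itv /= => /andP[ha2 hb2].
  have t0 : 0 < t by lra.
  have [d0 d00 hd0] := hf _ t0 1 ltr01.
  near=> t' M => /=; rewrite in_itv /= => /andP[h3 h4].
  have h1 : `|f t' - f t| < 1.
    apply: hd0; first lra.
    rewrite distrC; near: t'; exists d0 => //.
  have h2 : f t + 1 < M by near: M; apply: nbhs_pinfty_gt; exact: num_real.
  move: h1; rewrite ltr_norml => /andP[_ h5]; lra.
have /filter_ex[M hM] := H.
by exists M => t ht; apply: ltW; apply: hM; rewrite /= in_itv /=.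
Unshelve. all: by end_near.
Qed.

Lemma floor_succ (g t : R) : 0 < g -> 0 <= t ->
  nfloor (g * (t + g^-1)) = (nfloor (g * t)).+1.
Proof.
move=> g0 t0; rewrite /nfloor mulrDr mulfV ?gt_eqF //.
have y0 : 0 <= g * t by rewrite mulr_ge0 // ltW.
apply: truncn_def; move: (truncn_itv y0) => /andP[h1 h2].
by rewrite -natr1 lerD2r h1 /= -natr1 ltrD2r.
Qed.

Lemma final_alg (Qg Qt G N M S W1 W2 I1 I2 e ep eta tau eps : R) :
  0 < N -> 0 < eps -> 0 <= Qt -> Qt <= M -> 0 <= M -> `|G - N| < tau -> tau <= N / 2 ->
  M * tau <= eps * N / 8 -> e = eps * N / 8 -> ep = eps / 8 -> eta = eps / 4 ->
  S = W1 + W2 -> `|S - 2 * Qg * G| <= 2 * eta * G -> `|W1 - I1| < e -> `|W2 - I2| < e ->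
  `|I1 - Qt * N| <= ep * N -> `|I2 - Qt * N| <= ep * N -> `|Qg - Qt| <= eps.
Proof.
move=> N0 eps0 Qt0 QtM M0 hG htau hMt he hep heta hS hSG hW1 hW2 hI1 hI2.
have GN2 : N / 2 <= G.
  by move: hG; rewrite ltr_norml => /andP[h1 h2]; lra.
have G0 : 0 < G by lra.
move: hSG hW1 hW2 hI1 hI2; rewrite !ler_norml !ltr_norml.
move=> /andP[a1 a2] /andP[b1 b2] /andP[c1 c2] /andP[d1 d2] /andP[f1 f2].
have hNG : `|Qt * N - Qt * G| <= M * tau.
  rewrite -mulrBr normrM ger0_norm //; apply: ler_pM => //.
  by rewrite distrC ltW.
move: hNG; rewrite ler_norml => /andP[g1 g2].
have key : `|(Qg - Qt) * G| <= 3 * eps * N / 8 + eta * G.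
  rewrite mulrBl ler_norml; apply/andP; split; nra.
rewrite normrM (ger0_norm (ltW G0)) in key.
have : `|Qg - Qt| <= 3 * eps * N / 8 / G + eta.
  by rewrite -(ler_pM2r G0) mulrDl divfK ?gt_eqF.
move=> h.
have h3 : 3 * eps * N / 8 / G <= 3 * eps / 4.
  rewrite ler_pdivrMr //; nra.
move: h h3; move: (3 * eps * N / 8 / G) => z h h3.
have hh : `|Qg - Qt| <= eps by lra.
by rewrite -ler_norml.
Qed.
End misc.


Theorem proposition2p2
  (R : realType) (d0 : measure_display) (E : measurableType d0)
  (dE : E -> E -> R) (F : set E) (rho : E)
  (nu : {measure set E -> \bar R}) (q : R -> E -> R)
  (V : nat -> set E) (adj : nat -> E -> E -> Prop) (mu : nat -> E -> E -> R)
  (alpha beta gamma alphat : nat -> R) (g : nat -> E -> E) (a b : R)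
  (* (E, d_E) metric space with its Borel sigma-algebra *)
  (hdE : is_metric dE)
  (hborel : @measurable d0 E = <<s [set U | dopen dE U] >>)
  (* F meets closed balls in compact sets *)
  (hFcpt : forall x r, 0 < r -> dcompact dE (F `&` dcball dE x r))
  (hrho : F rho)
  (* nu : Radon measure of full support on F, extended to E by nu(A) = nu(A n F) *)
  (hnuF : forall A, measurable A -> nu A = nu (A `&` F))
  (hnu_lf : forall x, F x -> exists2 r : R, 0 < r & (nu (dball dE x r) < +oo)%E)
  (hnu_reg : forall A, measurable A -> A `<=` F ->
     nu A = ereal_sup [set nu K | K in [set K | measurable K /\ K `<=` A /\ dcompact dE K]])
  (hnu_supp : forall x r, F x -> 0 < r -> (0 < nu (dball dE x r))%E)
  (* q jointly continuous on (0,oo) x F, nonnegative, probability densities *)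
  (hq_cont : forall t x, 0 < t -> F x -> forall e : R, 0 < e ->
     exists2 del : R, 0 < del & forall s y, 0 < s -> F y -> `|s - t| < del ->
       dE x y < del -> `|q s y - q t x| < e)
  (hq_nonneg : forall t x, 0 < t -> F x -> 0 <= q t x)
  (hq_int : forall t, 0 < t -> (\int[nu]_(x in F) (q t x)%:E = 1)%E)
  (* the graphs G^n, n >= 1 *)
  (hG : forall n, (0 < n)%N -> is_lf_connected_graph (V n) (adj n) /\ V n rho)
  (hmu : forall n, (0 < n)%N -> forall x y,
     0 <= mu n x y /\ mu n x y = mu n y x /\ (0 < mu n x y <-> adj n x y))
  (* scaling sequences *)
  (hseq : forall n, (0 < n)%N -> 0 <= alpha n /\ 0 <= beta n /\ 0 <= gamma n)
  (halpha : alpha n @[n --> \oo] --> +oo)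
  (hbeta : beta n @[n --> \oo] --> +oo)
  (hgamma : gamma n @[n --> \oo] --> +oo)
  (* g_n(x) : a closest vertex of G^n to x *)
  (hg : forall n, (0 < n)%N -> forall x,
     V n (g n x) /\ forall v, V n v -> dE x (g n x) <= dE x v)
  (* the compact interval I = [a, b] in (0, oo) *)
  (ha : 0 < a) (hab : a <= b)
  (* Assumption (A1)(a) *)
  (hA1a1 : exists2 c1 : R, 0 < c1 & forall n, (0 < n)%N -> forall x y,
     V n x -> V n y -> c1 * alpha n * dE x y <= gdist (adj n) x y)
  (halphat_nonneg : forall n, (0 < n)%N -> 0 <= alphat n)
  (halphat : alphat =o_\oo alpha)
  (hA1a2 : forall r, 0 < r -> exists c2 : R, exists n0 : nat,
     forall n, (n0 <= n)%N -> (0 < n)%N -> forall x y,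
       V n x -> V n y -> dball dE rho r x -> dball dE rho r y ->
       gdist (adj n) x y <= c2 * alpha n * dE x y + alphat n)
  (* Assumption (A1)(b) *)
  (hA1b : forall r, 0 < r ->
     ereal_sup [set (dist_set dE x (V n))%:E | x in F `&` dball dE rho r]
       @[n --> \oo] --> 0%E)
  (* Assumption (A1)(c) *)
  (hA1c : forall x r, F x -> 0 < r ->
     ((beta n)^-1%:E * gmeasure (V n) (mu n) (dball dE x r))%E
       @[n --> \oo] --> nu (dball dE x r))
  (* Assumption (A1)(d) *)
  (hA1d : forall a' b', 0 < a' -> a' <= b' -> forall x r, F x -> 0 < r ->
     forall e : R, 0 < e -> \forall n \near \oo, forall t, a' <= t <= b' ->
       `|fine (wprob_set (V n) (mu n) (nfloor (gamma n * t)) rho (dball dE x r))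
         - fine (\int[nu]_(y in F `&` dball dE x r) (q t y)%:E)| < e)
  (* Assumption (A2) *)
  (hA2 : forall a' b', 0 < a' -> a' <= b' -> forall r, 0 < r ->
     limn_esup (fun n => ereal_sup
       [set z | exists x y t, gball (V n) (adj n) rho (alpha n * r) x /\
                 gball (V n) (adj n) rho (alpha n * r) y /\
                 gdist (adj n) x y <= alpha n * del /\ a' <= t <= b' /\
                 z = (beta n * `|qkernel (mu n) (nfloor (gamma n * t)) rho x
                                - qkernel (mu n) (nfloor (gamma n * t)) rho y|)%:E])
       @[del --> 0^'+] --> 0%E) :
  forall x, F x ->
    ereal_sup [set (`|beta n * qkernel (mu n) (nfloor (gamma n * t)) rho (g n x)
                       - q t x|)%:E | t in [set t | a <= t <= b]]
      @[n --> \oo] --> 0%E.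
Proof.
move=> x Fx.
have [dge0 [deq [dsym dtri]]] := hdE.
have dxx : forall z, dE z z = 0 by move=> z; apply/deq.
apply: ecvg0_intro => eps eps0.
have [M0' hM0'] : exists M, forall t, a <= t <= b -> q t x <= M.
  apply: (@cont_bound R (fun t => q t x) a b ha) => t t0 e e0.
  have [del del0 hdel] := hq_cont t x t0 Fx e e0.
  by exists del => // s s0 hs; apply: hdel => //; rewrite dxx.
pose M := Num.max M0' 0.
have M0 : 0 <= M by rewrite le_max lexx orbT.
have hM : forall t, a <= t <= b -> q t x <= M.
  by move=> t ht; rewrite le_max hM0'.
pose ep := eps / 8.
pose eta := eps / 4.
have ep0 : 0 < ep by rewrite divr_gt0.
have eta0 : 0 < eta by rewrite divr_gt0.
have [del1 del10 hdel1] := @unif_cont R E dE q F x (dxx x) Fx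
   (fun t t0 => hq_cont t x t0 Fx) a b ha ep ep0.
pose R0 := dE rho x + 1.
have R00 : 0 < R0 by rewrite /R0; have := dge0 rho x; lra.
have [c2 [n0 hc2]] := hA1a2 R0 R00.
pose C2 := `|c2|.
have C20 : 0 <= C2 by exact: normr_ge0.
pose R1 := C2 * R0 + 2.
have R10 : 0 < R1.
  have : 0 <= C2 * R0 by rewrite mulr_ge0 // ltW.
  rewrite /R1; lra.
pose SU := fun del n => ereal_sup [set z | exists x y t, gball (V n) (adj n) rho (alpha n * R1) x /\
                 gball (V n) (adj n) rho (alpha n * R1) y /\
                 gdist (adj n) x y <= alpha n * del /\ a <= t <= b /\
                 z = (beta n * `|qkernel (mu n) (nfloor (gamma n * t)) rho x
                                - qkernel (mu n) (nfloor (gamma n * t)) rho y|)%:E].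
have [del2 del20 hdel2] : exists2 del, 0 < del & \forall n \near \oo, (SU del n < eta%:E)%E.
  exact: (@A2_extract R SU (hA2 a b ha hab R1 R10) eta eta0).
have [r0 r00 hr0] := hnu_lf x Fx.
pose r := Num.min (Num.min r0 del1) (Num.min (del2 / (4 * (C2 + 1))) (1 / 2)).
have C21 : 0 < C2 + 1 by rewrite ltr_wpDl.
have r0' : 0 < r by rewrite /r !lt_min r00 del10 !divr_gt0 // mulr_gt0.
have rr0 : r <= r0 by rewrite /r ge_min ge_min lexx.
have rdel1 : r <= del1 by rewrite /r ge_min ge_min (lexx del1) !orbT.
have rdel2 : r <= del2 / (4 * (C2 + 1)) by rewrite /r !ge_min (lexx (del2 / (4 * (C2 + 1)))) !orbT.
have rhalf : r <= 1 / 2 by rewrite /r !ge_min (lexx (1 / 2)) !orbT.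
have C2r : 2 * C2 * r <= del2 / 2.
  have h : r * (4 * (C2 + 1)) <= del2 by rewrite -ler_pdivlMr // mulr_gt0.
  clear - h C20 r0'; lra.
pose B := dball dE x r.
have mB : measurable B by apply: (dopen_meas dE hborel); exact: (dball_open dE hdE).
have mD : measurable (F `&` B) by exact: (@meas_FB _ _ _ dE hdE hborel F hFcpt x r r0').
have nuB_fin : (nu B < +oo)%E.
  apply: le_lt_trans hr0; apply: le_measure; rewrite ?inE //.
    by apply: (dopen_meas dE hborel); exact: (dball_open dE hdE).
  by move=> z; rewrite /B /dball /=; clear - z rr0; lra.
have nuB_pos : (0 < nu B)%E by exact: hnu_supp.
pose N := fine (nu B).
have hN : nu B = N%:E by rewrite fineK // ge0_fin_numE // measure_ge0.
have N0 : 0 < N by rewrite -lte_fin -hN.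
have nuD : nu (F `&` B) = N%:E by rewrite setIC -hnuF.
pose e := eps * N / 8.
have e0 : 0 < e by rewrite /e !mulr_gt0.
pose tau := Num.min (N / 2) (eps * N / (8 * (M + 1))).
have M1 : 0 < M + 1 by rewrite ltr_wpDl.
have tau0 : 0 < tau by rewrite /tau lt_min !divr_gt0 // ?mulr_gt0.
have tauN : tau <= N / 2 by rewrite /tau ge_min lexx.
have hMtau : M * tau <= eps * N / 8.
  have h1 : tau <= eps * N / (8 * (M + 1)) by rewrite /tau ge_min (lexx (eps * N / (8 * (M + 1)))) orbT.
  have h : tau * (8 * (M + 1)) <= eps * N by rewrite -ler_pdivlMr // mulr_gt0.
  clear - h h1 M0 tau0; lra.
pose k := Num.min (del2 / 2) 1.
have k0 : 0 < k by rewrite /k lt_min ltr01 andbT divr_gt0.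
have kdel : k <= del2 / 2 by rewrite /k ge_min lexx.
have k1 : k <= 1 by rewrite /k ge_min (lexx 1) orbT.
have hab1 : a <= b + 1 by rewrite ler_wpDr.
have hB1 := hA1d a (b + 1) ha hab1 x r Fx r0' e e0.
have hc := hA1c x r Fx r0'; rewrite -/B hN in hc.
have hc' := ecvg_extract hc _ tau0.
have hsup := ecvg_extract (hA1b R0 R00) _ r0'.
have ho := (eqoP _ _ _).1 halphat k k0.
near=> n.
have n_pos : (0 < n)%N by near: n; exists 1%N.
have n_n0 : (n0 <= n)%N by near: n; exists n0.
have gam : 1 + del1^-1 < gamma n by near: n; exact: ((cvgryPgt _).1 hgamma).
have alp : 0 < alpha n by near: n; exact: ((cvgryPgt _).1 halpha).
have bet : 0 < beta n by near: n; exact: ((cvgryPgt _).1 hbeta).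
have hk : `|alphat n| <= k * `|alpha n| by near: n; exact: ho.
have [hsup1 hsup2] : (ereal_sup [set (dist_set dE x0 (V n))%:E | x0 in F `&` dball dE rho R0]) =
     (fine (ereal_sup [set (dist_set dE x0 (V n))%:E | x0 in F `&` dball dE rho R0]))%:E /\
     `|0 - fine (ereal_sup [set (dist_set dE x0 (V n))%:E | x0 in F `&` dball dE rho R0])| < r.
  by near: n; exact: hsup.
have hSU : (SU del2 n < eta%:E)%E by near: n; exact: hdel2.
have hW : forall t, a <= t <= b + 1 ->
   `|fine (wprob_set (V n) (mu n) (nfloor (gamma n * t)) rho (dball dE x r)) -
     fine (\int[nu]_(y in F `&` dball dE x r) (q t y)%:E)| < e.
  by near: n; exact: hB1.
have [hG1 hG2] : ((beta n)^-1%:E * gmeasure (V n) (mu n) B)%E =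
      (fine ((beta n)^-1%:E * gmeasure (V n) (mu n) B)%E)%:E /\
    `|N - fine ((beta n)^-1%:E * gmeasure (V n) (mu n) B)%E| < tau.
  by near: n; exact: hc'.
have [hGn Vrho] := hG n n_pos.
have hmun := hmu n n_pos.
have mu0 : forall y z, 0 <= mu n y z by move=> y z; case: (hmun y z).
have hmu' : forall y z, 0 < mu n y z <-> adj n y z by move=> y z; case: (hmun y z) => _ [].
have [Vg hgmin] := hg n n_pos x.
have aphat : alphat n <= k * alpha n.
  by apply: le_trans (ler_norm _) _; rewrite -(ger0_norm (ltW alp)).
have dgx : dE x (g n x) < r.
  have hdist : dE x (g n x) <= dist_set dE x (V n).
    apply: lb_le_inf; first by exists (dE x (g n x)); exists (g n x).
    by move=> _ [v Vv <-]; exact: hgmin.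
  have xin : (F `&` dball dE rho R0) x by split => //; rewrite /dball /R0 /= ltrDl.
  have := @ereal_sup_ubound _ [set (dist_set dE x0 (V n))%:E | x0 in F `&` dball dE rho R0]
    (dist_set dE x (V n))%:E (ex_intro2 _ _ x xin erefl).
  rewrite hsup1 lee_fin => h.
  move: hsup2; rewrite sub0r normrN => h2.
  have h3 := le_lt_trans (ler_norm _) h2.
  clear - h h3 hdist; lra.
have hR0 : forall z, dE x z < 1 -> dE rho z < R0.
  by move=> z hz; have h := dtri rho x z; rewrite /R0; clear - h hz; lra.
have hgd : forall u v, V n u -> V n v -> dE rho u < R0 -> dE rho v < R0 ->
    gdist (adj n) u v <= C2 * alpha n * dE u v + alphat n.
  move=> u v Vu Vv hu hv.
  apply: le_trans (hc2 n n_n0 n_pos u v Vu Vv hu hv) _.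
  rewrite lerD2r; apply: ler_wpM2r; first exact: dge0.
  by apply: ler_wpM2r; [exact: ltW | exact: ler_norm].
have hball : forall v, V n v -> dE rho v < R0 -> gball (V n) (adj n) rho (alpha n * R1) v.
  move=> v Vv hv; split => //.
  apply: le_lt_trans (hgd rho v Vrho Vv _ hv) _; first by rewrite dxx.
  have h1 : C2 * alpha n * dE rho v <= C2 * alpha n * R0.
    by apply: ler_wpM2l; [rewrite mulr_ge0 // ltW | exact: ltW].
  have hka : k * alpha n <= alpha n by rewrite ger_pMl.
  rewrite /R1; clear - h1 aphat hka alp; lra.
have hgxR0 : dE rho (g n x) < R0 by apply: hR0; clear - dgx rhalf; lra.
have hq : forall t, a <= t <= b -> forall y, V n y -> B y ->
    `|qkernel (mu n) (nfloor (gamma n * t)) rho y - qkernel (mu n) (nfloor (gamma n * t)) rho (g n x)|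
      <= eta / beta n.
  move=> t ht y Vy By.
  have hyR0 : dE rho y < R0 by apply: hR0; rewrite /B /dball /= in By; clear - By rhalf; lra.
  have hgy : gdist (adj n) (g n x) y <= alpha n * del2.
    apply: le_trans (hgd _ _ Vg Vy hgxR0 hyR0) _.
    have h1 : dE (g n x) y <= 2 * r.
      have := dtri (g n x) x y; rewrite (dsym (g n x) x).
      rewrite /B /dball /= in By; clear - By dgx; lra.
    have h2 : C2 * alpha n * dE (g n x) y <= C2 * alpha n * (2 * r).
      by apply: ler_wpM2l; [rewrite mulr_ge0 // ltW | exact: h1].
    have h3 : alpha n * k <= alpha n * (del2 / 2) by apply: ler_wpM2l; [exact: ltW | exact: kdel].
    have h4 : alpha n * (2 * C2 * r) <= alpha n * (del2 / 2) by apply: ler_wpM2l; [exact: ltW | exact: C2r].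
    clear - h2 h3 h4 aphat h1; lra.
  have helem : ((beta n * `|qkernel (mu n) (nfloor (gamma n * t)) rho (g n x)
                     - qkernel (mu n) (nfloor (gamma n * t)) rho y|)%:E <= SU del2 n)%E.
    apply: ereal_sup_ubound; exists (g n x), y, t; split; first exact: hball.
    by split; [exact: hball | split].
  have := le_lt_trans helem hSU; rewrite lte_fin distrC => h.
  by rewrite ler_pdivlMr // mulrC; exact: ltW.
have wpos : forall y, V n y -> 0 < wdeg (mu n) y.
  exact: (@wdeg_gt0 R E (mu n) mu0 (V n) (adj n) hGn hmu').
pose Gv := fine (((beta n)^-1)%:E * gmeasure (V n) (mu n) B)%E.
have hgm : gmeasure (V n) (mu n) B = (beta n * Gv)%:E.
  have -> : gmeasure (V n) (mu n) B = ((beta n)%:E * (((beta n)^-1)%:E * gmeasure (V n) (mu n) B))%E.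
    by rewrite muleA -EFinM mulfV ?gt_eqF // mul1e.
  by rewrite hG1 -EFinM.
have core : forall t, a <= t <= b ->
    `|beta n * qkernel (mu n) (nfloor (gamma n * t)) rho (g n x) - q t x| <= eps.
  move=> t ht.
  have t0 : 0 < t by case/andP: ht => ht1 _; apply: lt_le_trans ha ht1.
  pose m := nfloor (gamma n * t).
  have gam0 : 0 < gamma n.
    have : 0 < 1 + del1^-1 by rewrite addr_gt0 // invr_gt0.
    by move=> h; apply: lt_trans h gam.
  have ginv1 : (gamma n)^-1 < del1.
    rewrite -[X in _ < X]invrK ltf_pV2 ?posrE ?invr_gt0 //.
    by apply: le_lt_trans gam; rewrite lerDr.
  have ginv2 : (gamma n)^-1 < 1.
    rewrite invf_lt1 //; apply: le_lt_trans gam; rewrite lerDl invr_ge0 ltW //.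
  pose t' := t + (gamma n)^-1.
  have hm1 : nfloor (gamma n * t') = m.+1 by apply: floor_succ => //; exact: ltW.
  have ht1 : a <= t <= b + 1 by case/andP: ht => h1 h2; rewrite h1 /=; clear - h2; lra.
  have ht'1 : a <= t' <= b + 1.
    case/andP: ht => h1 h2; have h3 : 0 < (gamma n)^-1 by rewrite invr_gt0.
    rewrite /t'; apply/andP; split; clear - h1 h2 h3 ginv2; lra.
  have hW1 := hW t ht1.
  have hW2 := hW t' ht'1; rewrite hm1 in hW2.
  have qt0 : 0 <= q t x by exact: hq_nonneg.
  have [If1 hI1] : (\int[nu]_(y in F `&` B) (q t y)%:E)%E \is a fin_num /\
      `|fine (\int[nu]_(y in F `&` B) (q t y)%:E)%E - q t x * N| <= ep * N.
    apply: (@int_sandwich R _ E nu) => //; first exact: ltW.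
      by move=> y [Fy _]; exact: hq_nonneg.
    move=> y [Fy By]; apply: ltW; apply: hdel1 => //; first by rewrite subrr normr0.
    by rewrite /B /dball /= in By; clear - By rdel1; lra.
  have t'0 : 0 < t' by rewrite /t' addr_gt0 // invr_gt0.
  have [If2 hI2] : (\int[nu]_(y in F `&` B) (q t' y)%:E)%E \is a fin_num /\
      `|fine (\int[nu]_(y in F `&` B) (q t' y)%:E)%E - q t x * N| <= ep * N.
    apply: (@int_sandwich R _ E nu) => //; first exact: ltW.
      by move=> y [Fy _]; exact: hq_nonneg.
    move=> y [Fy By]; apply: ltW; apply: hdel1 => //.
      by rewrite /t' addrAC subrr add0r ger0_norm ?invr_ge0 ?ltW.
    by rewrite /B /dball /= in By; clear - By rdel1; lra.
  pose f2 := fun y => pkernel (mu n) m rho y + pkernel (mu n) m.+1 rho y.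
  pose qg := qkernel (mu n) m rho (g n x).
  have qg0 : 0 <= qg by exact: qkernel_ge0.
  have [S [hS1 hS2]] : exists S, \esum_(i in B `&` V n) (f2 i * wdeg (mu n) i)%:E = S%:E /\
      `|S - 2 * qg * (beta n * Gv)| <= 2 * (eta / beta n) * (beta n * Gv).
    apply: (@esum_sandwich R E (B `&` V n) f2 (wdeg (mu n))) => //.
    - by rewrite mulr_ge0.
    - by rewrite mulr_ge0 // divr_ge0 // ltW.
    - by move=> y _; exact: wdeg_ge0.
    - by move=> y _; rewrite /f2 addr_ge0 // pkernel_ge0.
    - move=> y [By Vy].
      have -> : f2 y = 2 * qkernel (mu n) m rho y.
        by rewrite /f2 /qkernel mulrC divfK // pnatr_eq0.
      rewrite -mulrBr normrM ger0_norm // ler_pM2l //.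
      exact: (hq t ht y Vy By).
  pose W1 := wprob_set (V n) (mu n) m rho B.
  pose W2 := wprob_set (V n) (mu n) m.+1 rho B.
  have hWsum : (W1 + W2)%E = S%:E.
    rewrite -hS1 /W1 /W2 /wprob_set -esumD; last 2 first.
    - by move=> y _; exact: wprob_ge0.
    - by move=> y _; exact: wprob_ge0.
    apply: eq_esum => y [By Vy]; rewrite /f2 mulrDl EFinD.
    by rewrite (pkernel_wdeg (mu n) mu0 _ _ _ (wpos y Vy)) (pkernel_wdeg (mu n) mu0 _ _ _ (wpos y Vy)).
  have W10 : (0 <= W1)%E by apply: esum_ge0 => y _; exact: wprob_ge0.
  have W20 : (0 <= W2)%E by apply: esum_ge0 => y _; exact: wprob_ge0.
  have W1fin : W1 \is a fin_num.
    by rewrite ge0_fin_numE // (le_lt_trans (leeDl _ W20)) // hWsum ltry.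
  have W2fin : W2 \is a fin_num.
    by rewrite ge0_fin_numE // (le_lt_trans (leeDr _ W10)) // hWsum ltry.
  have hSW : S = fine W1 + fine W2.
    by move: hWsum; rewrite -(fineK W1fin) -(fineK W2fin) -EFinD => -[->].
  have e1 : 2 * (eta / beta n) * (beta n * Gv) = 2 * eta * Gv.
    by rewrite !mulrA divfK ?gt_eqF.
  have e2 : 2 * qg * (beta n * Gv) = 2 * (beta n * qg) * Gv by ring.
  rewrite e1 e2 in hS2.
  apply: (@final_alg R (beta n * qg) (q t x) Gv N M S (fine W1) (fine W2)
     (fine (\int[nu]_(y in F `&` B) (q t y)%:E)%E) (fine (\int[nu]_(y in F `&` B) (q t' y)%:E)%E)
     e ep eta tau eps) => //.
  - exact: hM.
  - by rewrite distrC.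
split.
  apply: le_trans (ereal_sup_ubound _); last first.
    by exists a; first by rewrite /= lexx hab.
  by rewrite lee_fin.
apply: ge_ereal_sup => _ [t ht <-]; rewrite lee_fin.
exact: core.
Unshelve. all: by end_near.
Qed.
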